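(* Let $s,r \ge 2$ and $q \ge 1$ be integers. If $R(s,q) \geq r$, then $Q(s,r) \leq q$.
   Context: The product dimension of a finite graph $G$ is the minimum possible number $d$ of proper vertex colorings of $G$ such that for every pair $u,v$ of distinct non-adjacent vertices there is at least one of the colorings in which $u$ and $v$ receive the same color. $K_s(r)$ denotes the graph consisting of $r$ pairwise vertex-disjoint copies of the complete graph $K_s$, and $Q(s,r)$ is the product dimension of $K_s(r)$. Let $Z_s$ be the ring of integers modulo $s$. For $A \subseteq Z_s$, a vector $v=(v_1,\dots,v_q)\in Z_s^q$ is $A$-covering if for every $a \in A$ there is $1 \le i \le q$ with $v_i = a$. A family $\mathcal{F} \subseteq Z_s^q$ is $A$-covering if for every ordered pair of distinct vectors $u,v \in \mathcal{F}$ the difference $u-v$ is $A$-covering; it is covering if it is $Z_s$-covering. $R(s,q)$ denotes the maximum possible cardinality of a covering family in $Z_s^q$. *)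

(* Defs.v *)
From mathcomp Require Import all_boot all_order all_algebra.
From mathcomp Require Import boolp.
Set Implicit Arguments. Unset Strict Implicit. Unset Printing Implicit Defensive.
Import GRing.Theory.
Local Open Scope ring_scope.

Definition proper_coloring (V : finType) (adj : rel V) (c : V -> nat) : Prop :=
  forall u v : V, adj u v -> c u <> c v.

Definition pd_ok (V : finType) (adj : rel V) (d : nat) : Prop :=
  exists cs : 'I_d -> V -> nat,
    (forall i, proper_coloring adj (cs i)) /\
    (forall u v : V, u <> v -> ~~ adj u v -> exists i : 'I_d, cs i u = cs i v).

(* The minimum such d (such a d always exists for a finite graph; the
   fallback value 0 in the other branch is never used). *)
Definition product_dim (V : finType) (adj : rel V) : nat :=
  match pselect (exists d, pd_ok adj d) with
  | left H =>
      @ex_minn (fun d => `[< pd_ok adj d >])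
        (let: ex_intro d Hd := H in ex_intro _ d (asboolT Hd))
  | right _ => 0%N
  end.

(* K_s(r): r disjoint copies of K_s; vertex (i, j) = vertex j of copy i. *)
Definition Ksr_adj (s r : nat) : rel ('I_r * 'I_s) :=
  fun x y => (x.1 == y.1) && (x.2 != y.2).

Definition Q (s r : nat) : nat := product_dim (@Ksr_adj s r).

Definition A_covering_vec (s q : nat) (A : {set 'Z_s}) (v : {ffun 'I_q -> 'Z_s}) : bool :=
  [forall a in A, [exists i : 'I_q, v i == a]].

Definition A_covering_family (s q : nat) (A : {set 'Z_s})
    (F : {set {ffun 'I_q -> 'Z_s}}) : bool :=
  [forall u in F, [forall v in F,
     (u != v) ==> A_covering_vec A [ffun i => u i - v i]]].

Definition covering_family (s q : nat) (F : {set {ffun 'I_q -> 'Z_s}}) : bool :=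
  A_covering_family [set: 'Z_s] F.

Definition R (s q : nat) : nat :=
  \max_(F : {set {ffun 'I_q -> 'Z_s}} | covering_family F) #|F|.

(* Main.v *)
Require Import Defs.
From mathcomp Require Import all_boot.
From mathcomp Require Import all_algebra boolp.
Import GRing.Theory.

Lemma pd_ok_from (n r q : nat) (vec : 'I_r -> {ffun 'I_q -> 'Z_(n.+2)}) :
  (forall k k', k <> k' -> [forall a : 'Z_(n.+2), [exists i, (vec k i - vec k' i)%R == a]]) ->
  pd_ok (@Ksr_adj n.+2 r) q.
Proof.
move=> Hcov.
exists (fun i (x : 'I_r * 'I_(n.+2)) => nat_of_ord ((vec x.1 i + inZp x.2)%R : 'Z_(n.+2))).
split.
- move=> i [k j] [k' j'] /andP [/= /eqP Ek Nj] Hc; subst k'.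
  have {}Hc : ((vec k i + inZp j)%R : 'Z_(n.+2)) = (vec k i + inZp j')%R by apply: val_inj.
  move/addrI: Hc => /(congr1 val) /=.
  rewrite !modn_small // => Hjj.
  by move/negP: Nj; apply; apply/eqP/val_inj.
- move=> [k j] [k' j'] Nuv Nadj.
  have Nk : k <> k'.
    move=> Ek; subst k'; apply: Nuv; congr pair.
    move: Nadj; rewrite /Ksr_adj /= eqxx /= negbK => /eqP //.
  move: (Hcov k k' Nk) => /forallP /(_ (inZp j' - inZp j)%R) /existsP [i /eqP Hi].
  exists i.
  have E : ((vec k i + inZp j)%R : 'Z_(n.+2)) = (vec k' i + inZp j')%R.
    have -> : vec k i = (vec k' i + (inZp j' - inZp j))%R by rewrite -Hi addrC subrK.
    by rewrite -addrA subrK.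
  exact: (congr1 val E).
Qed.

Theorem proposition1p2 (s r q : nat) :
  (2 <= s)%N -> (2 <= r)%N -> (1 <= q)%N ->
  (r <= R s q)%N -> (Q s r <= q)%N.
Proof.
case: s => [|[|n]] // _ Hr _ HR.
have Hpd : pd_ok (@Ksr_adj n.+2 r) q.
  have hA : (0 < #|[pred F : {set {ffun 'I_q -> 'Z_(n.+2)}} | covering_family F]|)%N.
    apply/card_gt0P; exists set0; rewrite inE.
    by apply/forallP => u; apply/implyP; rewrite inE.
  case: (eq_bigmax_cond (fun F : {set {ffun 'I_q -> 'Z_(n.+2)}} => #|F|) hA) => F.
  rewrite inE => HF Hmax.
  rewrite /R in HR.
  have HrF : (r <= #|F|)%N.
    by move: HR; rewrite -Hmax.
  pose vec (k : 'I_r) := nth [ffun=> 0%R] (enum F) k.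
  apply: (@pd_ok_from n r q vec) => k k' Nkk'.
  have Hk : forall k : 'I_r, (k < size (enum F))%N.
    by move=> k0; rewrite -cardE; apply: leq_trans HrF.
  have Hin : forall k : 'I_r, vec k \in F.
    by move=> k0; rewrite -mem_enum; apply: mem_nth.
  have Hne : vec k != vec k'.
    rewrite /vec nth_uniq ?enum_uniq //.
    by apply/negP => /eqP /val_inj.
  move/forallP: HF => /(_ (vec k)) /implyP /(_ (Hin k)) /forallP /(_ (vec k'))
    /implyP /(_ (Hin k')) /implyP /(_ Hne) /forallP Hc.
  apply/forallP => a; move: (Hc a); rewrite in_setT /= => /existsP [i /eqP Hi].
  by apply/existsP; exists i; rewrite -Hi ffunE.
rewrite /Q /product_dim.
case: pselect => [H|H] //.
case: ex_minnP => m _ Hmin; apply: Hmin.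
by apply/asboolP.
Qed.
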